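(* Let $E$ be an acyclic directed graph and let $G(E)$ carry a Hausdorff topology $\tau$ making it a topological semigroup. Then $(G(E),\tau)$ embeds (as a subsemigroup and topological subspace) densely into a CLP-compact topological semigroup $S$ if and only if $(G(E),\tau)$ is compact, i.e., $\tau=\tau_c$.
   Context: All spaces are Hausdorff. CLP-compact: every cover by clopen sets has a finite subcover. A directed graph $E=(E^0,E^1,r,s)$ has vertex set $E^0$, edge set $E^1$, source and range maps $s,r:E^1\to E^0$; paths are vertices (length zero) and sequences of edges $e_1\ldots e_n$ with $r(e_i)=s(e_{i+1})$; a cycle is a path $x$ of non-zero length with $s(x)=r(x)$; $E$ is acyclic if it has no cycles. The graph inverse semigroup $G(E)$ is the semigroup with zero $0$ generated by $E^0$, $E^1$, $E^{-1}=\{e^{-1}\mid e\in E^1\}$ subject to: for $a,b\in E^0$, $e,f\in E^1$: $ab=a$ if $a=b$, else $0$; $s(e)e=er(e)=e$; $e^{-1}s(e)=r(e)e^{-1}=e^{-1}$; $e^{-1}f=r(e)$ if $e=f$, else $0$. Non-zero elements are uniquely $uv^{-1}$ with $u,v$ paths, $r(u)=r(v)$. The topology $\tau_c$ on $G(E)$: non-zero elements are isolated and the neighborhoods of $0$ are the cofinite sets containing $0$. *)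

(* Defs.v *)
From mathcomp Require Import all_boot.
From Stdlib Require List.

Set Implicit Arguments.
Unset Strict Implicit.
Unset Printing Implicit Defensive.

Record graph := Graph {
  vtx : eqType;
  edg : eqType;
  gsrc : edg -> vtx;
  grng : edg -> vtx
}.

Section GraphInverseSemigroup.
Variable E : graph.

(* A path is a start vertex together with a (possibly empty) list of edges;
   the empty list gives the length-zero path (the vertex itself). *)
Definition pth := (vtx E * seq (edg E))%type.

Definition pvalid (p : pth) : bool :=
  if p.2 is e :: es then (gsrc e == p.1) && path (fun e f => grng e == gsrc f) e es
  else true.

Definition psrc (p : pth) : vtx E := p.1.
Definition prng (p : pth) : vtx E :=
  if p.2 is e :: es then grng (last e es) else p.1.

Definition acyclic : Prop :=
  forall p : pth, pvalid p -> p.2 <> [::] -> prng p <> psrc p.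

(* Normal forms: None = 0, Some (u, v) = u v^{-1} with r(u) = r(v). *)
Definition gwf (x : option (pth * pth)) : bool :=
  if x is Some (u, v) then [&& pvalid u, pvalid v & prng u == prng v] else true.

Definition GE := {x : option (pth * pth) | gwf x}.

Definition gzero : GE := exist _ None isT.

(* (u v^{-1})(w z^{-1}) = u p z^{-1}      if w = v p,
                         = u (z q)^{-1}    if v = w q,
                         = 0               otherwise. *)
Definition rmul (x y : option (pth * pth)) : option (pth * pth) :=
  match x, y with
  | Some (u, v), Some (w, z) =>
      if (w.1 == v.1) && prefix v.2 w.2 then
        Some ((u.1, u.2 ++ drop (size v.2) w.2), z)
      else if (v.1 == w.1) && prefix w.2 v.2 then
        Some (u, (z.1, z.2 ++ drop (size w.2) v.2))
      else None
  | _, _ => None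
  end.

(* The product of two normal forms is again a normal form, so insubd never
   falls back to its default. *)
Definition gmul (x y : GE) : GE := insubd gzero (rmul (val x) (val y)).

End GraphInverseSemigroup.

Section Topology.
Variable T : Type.
Implicit Types (O : (T -> Prop) -> Prop).

Definition is_topology O : Prop :=
  [/\ O (fun _ => True),
      (forall U V, O U -> O V -> O (fun x => U x /\ V x)) &
      (forall F : (T -> Prop) -> Prop, (forall U, F U -> O U) ->
         O (fun x => exists U, F U /\ U x))].

Definition hausdorff O : Prop :=
  forall x y : T, x <> y -> exists U V, [/\ O U, O V, U x, V y &
    forall z, U z -> V z -> False].

Definition clopen O (U : T -> Prop) : Prop := O U /\ O (fun x => ~ U x).

Definition compact O : Prop :=
  forall F : (T -> Prop) -> Prop, (forall U, F U -> O U) ->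
    (forall x, exists U, F U /\ U x) ->
    exists l : list (T -> Prop), (forall U, List.In U l -> F U) /\
      (forall x, exists U, List.In U l /\ U x).

Definition clp_compact O : Prop :=
  forall F : (T -> Prop) -> Prop, (forall U, F U -> clopen O U) ->
    (forall x, exists U, F U /\ U x) ->
    exists l : list (T -> Prop), (forall U, List.In U l -> F U) /\
      (forall x, exists U, List.In U l /\ U x).

Definition jcont O (m : T -> T -> T) : Prop :=
  forall x y (W : T -> Prop), O W -> W (m x y) ->
    exists U V, [/\ O U, O V, U x, V y & forall a b, U a -> V b -> W (m a b)].

Definition top_semigroup O (m : T -> T -> T) : Prop :=
  [/\ is_topology O, hausdorff O, associative m & jcont O m].

Definition dense O (A : T -> Prop) : Prop :=
  forall V, O V -> (exists y, V y) -> exists y, V y /\ A y.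

End Topology.

Definition top_embedding (T S : Type) (OT : (T -> Prop) -> Prop)
  (OS : (S -> Prop) -> Prop) (f : T -> S) : Prop :=
  injective f /\
  forall U : T -> Prop, OT U <-> exists V, OS V /\ forall x, U x <-> V (f x).

(* The topology tau_c on G(E): non-zero elements are isolated and the
   neighbourhoods of 0 are the cofinite sets containing 0. *)
Definition tau_c (E : graph) (U : GE E -> Prop) : Prop :=
  U (gzero E) -> exists l : list (GE E), forall x, ~ U x -> List.In x l.

(* Main.v *)
Require Import Defs.
From mathcomp Require Import all_boot.
From Stdlib Require List.
From Stdlib Require Import Classical FunctionalExtensionality PropExtensionality.
Set Implicit Arguments.
Unset Strict Implicit.
Unset Printing Implicit Defensive.


Section Alg.
Variable E : graph.

Fixpoint vp (a : vtx E) (s : seq (edg E)) : bool :=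
  match s with [::] => true | e :: es => (gsrc e == a) && vp (grng e) es end.
Definition endv (a : vtx E) (s : seq (edg E)) := last a (map (@grng E) s).

Lemma pathvp e es : path (fun e f => grng e == gsrc f) e es = vp (grng e) es.
Proof.
elim: es e => [|f fs IH] e //=. by rewrite IH eq_sym.
Qed.

Lemma pvalidE (p : pth E) : pvalid p = vp p.1 p.2.
Proof. case: p => a [|e es] //=. rewrite /pvalid /=. by rewrite pathvp. Qed.

Lemma prngE (p : pth E) : prng p = endv p.1 p.2.
Proof. case: p => a [|e es] //=. by rewrite /endv /= last_map. Qed.

Lemma vp_cat a s1 s2 : vp a (s1 ++ s2) = vp a s1 && vp (endv a s1) s2.
Proof.
elim: s1 a => [|e s IH] a //=. by rewrite IH andbA.
Qed.

Lemma endv_cat a s1 s2 : endv a (s1 ++ s2) = endv (endv a s1) s2.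
Proof. by rewrite /endv map_cat last_cat. Qed.

Lemma prefix_cat_drop (t p : seq (edg E)) : prefix t p -> p = t ++ drop (size t) p.
Proof. rewrite prefixE => /eqP H. by rewrite -{1}(cat_take_drop (size t) p) H. Qed.

Lemma gwfE (u v : pth E) : @gwf E (Some (u, v)) =
  [&& vp u.1 u.2, vp v.1 v.2 & endv u.1 u.2 == endv v.1 v.2].
Proof. by rewrite /gwf !pvalidE !prngE. Qed.

Lemma rmul_wf (x y : option (pth E * pth E)) : gwf x -> gwf y -> gwf (rmul x y).
Proof.
case: x => [[[a s] [b t]]|] //; case: y => [[[c p] [d q]]|] //.
rewrite !gwfE /= => /and3P [Hs Ht /eqP Hst] /and3P [Hp Hq /eqP Hpq].
case: ifP => [/andP [/eqP Hc Hpre] | _].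
  move: (prefix_cat_drop Hpre); set p' := drop _ _ => Ep.
  move: Hp Hpq; rewrite Hc Ep vp_cat endv_cat => /andP [_ H2] Hr.
  by rewrite gwfE /= vp_cat Hs Hq Hst H2 endv_cat Hst Hr eqxx.
case: ifP => [/andP [/eqP Hc Hpre] | _] //.
move: (prefix_cat_drop Hpre); set t' := drop _ _ => Ep.
move: Ht Hst; rewrite Ep vp_cat endv_cat Hc Hpq => /andP [_ H2] Hr.
by rewrite gwfE /= vp_cat Hq Hs H2 endv_cat Hr eqxx.
Qed.

Definition mkGE (o : option (pth E * pth E)) : GE E := insubd (gzero E) o.

Lemma val_mkGE o : gwf o -> val (mkGE o) = o.
Proof. move=> H. by rewrite /mkGE insubdK. Qed.

Lemma val_gmul (x y : GE E) : val (gmul x y) = rmul (val x) (val y).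
Proof. rewrite /gmul. apply: val_mkGE. apply: rmul_wf; exact: valP. Qed.


Definition vtxo (w : vtx E) : option (pth E * pth E) := Some ((w, [::]), (w, [::])).
Definition ao (u : pth E) : option (pth E * pth E) := Some (u, (endv u.1 u.2, [::])).
Definition bo (u : pth E) : option (pth E * pth E) := Some ((endv u.1 u.2, [::]), u).
Definition finvo (f : edg E) : option (pth E * pth E) := Some ((grng f, [::]), (gsrc f, [:: f])).
Definition feo (g : edg E) : option (pth E * pth E) := Some ((gsrc g, [:: g]), (grng g, [::])).

Lemma rmul_vtx_l e (u v : pth E) :
  rmul (vtxo e) (Some (u, v)) = if u.1 == e then Some (u, v) else None.
Proof.
case: u => a s; rewrite /rmul /vtxo /= prefix0s andbT drop0 /=.
case: eqP => [->|/eqP H] //. by rewrite eq_sym (negbTE H).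
Qed.

Lemma rmul_vtx_r e (u v : pth E) :
  rmul (Some (u, v)) (vtxo e) = if v.1 == e then Some (u, v) else None.
Proof.
case: u => a s; case: v => b [|x t]; rewrite /rmul /vtxo /=.
  case: eqP => [->|/eqP H]; first by rewrite eqxx cats0.
  by rewrite eq_sym (negbTE H).
case: eqP => [->|/eqP H] /=; first by rewrite eqxx.
by rewrite eq_sym (negbTE H).
Qed.

Lemma rmul_gl (u v : pth E) : rmul (Some (u, u)) (Some (u, v)) = Some (u, v).
Proof. case: u => a s. by rewrite /rmul /= eqxx prefix_refl /= drop_size cats0. Qed.

Lemma rmul_hr (u v : pth E) : rmul (Some (u, v)) (Some (v, v)) = Some (u, v).
Proof. case: u => a s; case: v => b t. by rewrite /rmul /= eqxx prefix_refl /= drop_size cats0. Qed.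

Lemma rmul_idp (u u0 : pth E) : rmul (Some (u, u)) (Some (u0, u0)) =
  if (u0.1 == u.1) && prefix u.2 u0.2 then Some (u0, u0)
  else if (u.1 == u0.1) && prefix u0.2 u.2 then Some (u, u) else None.
Proof.
case: u => a s; case: u0 => b t; rewrite /rmul /=.
case: ifP => [/andP [/eqP -> H]|_]; first by rewrite -prefix_cat_drop.
case: ifP => [/andP [/eqP -> H]|_] //; by rewrite -prefix_cat_drop.
Qed.

Lemma rmul_ab (u : pth E) : rmul (ao u) (bo u) = Some (u, u).
Proof. case: u => a s. by rewrite /rmul /ao /bo /= eqxx /= cats0. Qed.

Lemma rmul_a_vtx (u : pth E) w : rmul (ao u) (vtxo w) = if endv u.1 u.2 == w then ao u else None.
Proof. by rewrite /ao rmul_vtx_r. Qed.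

Lemma rmul_vtx_b (u : pth E) w : rmul (vtxo w) (bo u) = if endv u.1 u.2 == w then bo u else None.
Proof. by rewrite /bo rmul_vtx_l. Qed.

Lemma rmul_vtx_vtx w w' : rmul (vtxo w) (vtxo w') = if w == w' then vtxo w else None.
Proof. rewrite rmul_vtx_l /=. case: eqP => [->|]; case: eqP => //. by move=> ->. Qed.

Lemma rmul_finv f a u' (v : pth E) : gsrc f = a ->
  rmul (finvo f) (Some ((a, f :: u'), v)) = Some ((grng f, u'), v).
Proof. move=> <-. by rewrite /rmul /finvo /= !eqxx prefix0s /= drop0. Qed.

Lemma rmul_finv_pre f u' (v w z : pth E) :
  rmul (finvo f) (Some (w, z)) = Some ((grng f, u'), v) ->
  (w = (gsrc f, f :: u') /\ z = v) \/ (w = (gsrc f, [::]) /\ z.1 = v.1 /\ rcons z.2 f = v.2).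
Proof.
case: w => c [|x p]; rewrite /rmul /finvo /=.
  rewrite andbF andbT. case: eqP => // Hc [Hu Hv]. right. by rewrite -Hv Hc /= cats1.
rewrite prefix0s andbT drop0.
case: ifP => [/andP [/eqP Hc /eqP Hx] [Hp Hz] | H1].
  by left; rewrite Hc -Hx Hp Hz.
case: ifP => // /and3P [/eqP Hc /eqP Hx _].
by rewrite Hc Hx !eqxx in H1.
Qed.

Lemma rmul_fe g a b v' : gsrc g = b ->
  rmul (Some ((a, [::]), (b, g :: v'))) (feo g) = Some ((a, [::]), (grng g, v')).
Proof.
move=> <-. rewrite /rmul /feo /= !eqxx /=. case: v' => [|y v'] //=.
Qed.

Lemma rmul_fe_pre g a v' (w z : pth E) :
  rmul (Some (w, z)) (feo g) = Some ((a, [::]), (grng g, v')) ->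
  w = (a, [::]) /\ z = (gsrc g, g :: v').
Proof.
case: z => d [|x [|y q]]; case: w => c p; rewrite /rmul /feo /=.
- rewrite andbT andbF. case: ifP => // _ [_]. by case: p.
- rewrite !andbT cats0.
  case: ifP => [/andP [/eqP Hd /eqP Hx] [-> ->] <- | H1]; first by rewrite -Hd Hx.
  case: ifP => // /andP [/eqP Hd /eqP Hx]. by rewrite Hd Hx !eqxx in H1.
- rewrite !andbF andbT /=. case: ifP => // /andP [/eqP Hd /eqP Hx] [-> ->] <-. by rewrite Hd Hx.
Qed.

Hypothesis acyc : acyclic E.

Lemma acyc_cat a s p : vp a (s ++ p) -> endv a (s ++ p) = endv a s -> p = [::].
Proof.
rewrite vp_cat endv_cat => /andP [_ H] He.
case: p H He => [|e es] // H He. exfalso.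
apply: (acyc (p := (endv a s, e :: es))) => //.
- by rewrite pvalidE.
- by rewrite prngE.
Qed.

Lemma pref_ex (t s : seq (edg E)) : prefix t s -> exists p, s = t ++ p.
Proof. move=> H; exists (drop (size t) s); exact: prefix_cat_drop. Qed.

Lemma rmul_sq (u v : pth E) : gwf (Some (u, v)) -> rmul (Some (u, v)) (Some (u, v)) != None -> u = v.
Proof.
case: u => a s; case: v => b t; rewrite gwfE /rmul /= => /and3P [Hs Ht /eqP He].
case: ifP => [/andP [/eqP Hab /pref_ex [p Es]] _|_].
  subst s a. by rewrite (acyc_cat Hs He) cats0.
case: ifP => [/andP [/eqP Hab /pref_ex [p Es]] _|_] //.
subst t b. by rewrite (acyc_cat Ht (esym He)) cats0.
Qed.

Lemma rmul_orth (u u' : pth E) : vp u.1 u.2 -> vp u'.1 u'.2 -> endv u.1 u.2 = endv u'.1 u'.2 ->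
  u <> u' -> rmul (Some (u, u)) (Some (u', u')) = None.
Proof.
case: u => a s; case: u' => b t Hs Ht He Hne; rewrite rmul_idp /=.
case: ifP => [/andP [/eqP Hab /pref_ex [p Es]]|_].
  exfalso; apply: Hne. subst t b. by rewrite (acyc_cat Ht (esym He)) cats0.
case: ifP => [/andP [/eqP Hab /pref_ex [p Es]]|_] //.
exfalso; apply: Hne. subst s a. by rewrite (acyc_cat Hs He) cats0.
Qed.

End Alg.


Definition fincov (T : Type) (A : T -> Prop) := exists l : list T, forall x, A x -> List.In x l.

Lemma pred_ext (T : Type) (U V : T -> Prop) : (forall x, U x <-> V x) -> U = V.
Proof.
move=> H; apply: functional_extensionality => x; apply: propositional_extensionality; exact: H.
Qed.

Lemma cover_inj (T T' : Type) (h : T -> T') (A : T -> Prop) :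
  (forall x y, A x -> A y -> h x = h y -> x = y) ->
  forall L : list T', exists l, forall x, A x -> List.In (h x) L -> List.In x l.
Proof.
move=> Hi; elim=> [|b L [l IH]]; first by exists nil.
case: (classic (exists x, A x /\ h x = b)) => [[x0 [Ax0 Hx0]]|Hn].
  exists (x0 :: l) => x Ax [Hb|HL]; last by right; exact: IH.
  left; apply: Hi => //; by rewrite Hx0.
exists l => x Ax [Hb|HL]; last exact: IH.
exfalso; apply: Hn; by exists x.
Qed.

Lemma fincov_sub (T : Type) (A B : T -> Prop) : fincov B -> (forall x, A x -> B x) -> fincov A.
Proof. move=> [l Hl] H; exists l => x /H; exact: Hl. Qed.

Lemma fincov_or (T : Type) (A B : T -> Prop) : fincov A -> fincov B -> fincov (fun x => A x \/ B x).
Proof.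
move=> [l1 H1] [l2 H2]; exists (l1 ++ l2)%list => x [/H1|/H2] H; apply: List.in_or_app; tauto.
Qed.

Section Top.
Variable T : Type.
Variable O : (T -> Prop) -> Prop.
Hypothesis HO : is_topology O.

Lemma open_ext U V : O U -> (forall x, U x <-> V x) -> O V.
Proof. move=> HU H; by rewrite -(pred_ext H). Qed.

Lemma open_true : O (fun _ => True).
Proof. by case: HO. Qed.

Lemma open_inter U V : O U -> O V -> O (fun x => U x /\ V x).
Proof. case: HO => _ H _; exact: H. Qed.

Lemma open_local (A : T -> Prop) :
  (forall x, A x -> exists U, O U /\ U x /\ forall y, U y -> A y) -> O A.
Proof.
move=> H; case: HO => _ _ Hu.
have Hun := Hu (fun U => O U /\ forall y, U y -> A y) (fun U HU => HU.1).
apply: (open_ext Hun) => x; split.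
  by move=> [U [[_ HU] Ux]]; exact: HU.
move=> Ax; have [U [OU [Ux HU]]] := H x Ax. by exists U.
Qed.

Lemma extract_list (F : (T -> Prop) -> Prop) :
  (forall y, exists U, F U /\ U y) ->
  forall l : list T, exists L, (forall U, List.In U L -> F U) /\
    forall y, List.In y l -> exists U, List.In U L /\ U y.
Proof.
move=> Hc; elim=> [|y l [L [HL1 HL2]]]; first by exists nil.
have [U [FU Uy]] := Hc y.
exists (U :: L); split.
  by move=> V [<-|/HL1].
move=> z [<-|/HL2 [V [HV Vz]]]; first by exists U; split => //; left.
by exists V; split => //; right.
Qed.

Lemma compact_of_cof (z : T) :
  (forall U, O U -> U z -> fincov (fun x => ~ U x)) -> compact O.
Proof.
move=> H F HF Hc.
have [U0 [FU0 U0z]] := Hc z.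
have [l Hl] := H U0 (HF _ FU0) U0z.
have [L [HL1 HL2]] := extract_list Hc l.
exists (U0 :: L); split; first by move=> V [<-|/HL1].
move=> x; case: (classic (U0 x)) => [Ux|Nx]; first by exists U0; split => //; left.
have [V [HV Vx]] := HL2 x (Hl x Nx). by exists V; split => //; right.
Qed.

Section Haus.
Hypothesis HH : hausdorff O.

Lemma open_neq y : O (fun x => x <> y).
Proof.
apply: open_local => x Hxy.
have [U [V [OU OV Ux Vy Hd]]] := HH Hxy.
exists U; split => //; split => // t Ut Ety; subst t; exact: Hd Ut Vy.
Qed.

Lemma fin_iso (x : T) (l : list T) (Os : T -> Prop) : O Os -> Os x ->
  (forall y, Os y -> y = x \/ List.In y l) -> O (fun y => y = x).
Proof.
elim: l Os => [|h l IH] Os OOs Osx Hl.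
  apply: (@open_ext Os (fun y => y = x) OOs) => y; split; first by move/Hl => [|[]].
  by move=> ->.
case: (classic (h = x)) => [Ehx|Nhx].
  apply: (IH Os) => // y /Hl [|[<-|]]; auto.
apply: (IH (fun y => Os y /\ y <> h)).
- apply: open_inter => //; exact: open_neq.
- by split => // Exh; apply: Nhx.
- by move=> y [/Hl [|[<-|]] Hyh]; auto.
Qed.

Lemma fin_iso1 (x : T) (Os : T -> Prop) : O Os -> Os x ->
  (forall y1 y2, Os y1 -> Os y2 -> y1 <> x -> y2 <> x -> y1 = y2) -> O (fun y => y = x).
Proof.
move=> OOs Osx H.
case: (classic (exists y1, Os y1 /\ y1 <> x)) => [[y1 [Oy1 Ny1]]|Hn].
  apply: (fin_iso (l := y1 :: nil) OOs Osx) => y Oy.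
  case: (classic (y = x)) => [|Nyx]; first by left.
  right; left; exact: H.
apply: (fin_iso (l := nil) OOs Osx) => y Oy.
case: (classic (y = x)) => [|Nyx]; first by left.
exfalso; apply: Hn; by exists y.
Qed.

Lemma compact_cof (z : T) : compact O -> (forall x, x <> z -> O (fun y => y = x)) ->
  forall U, O U -> U z -> fincov (fun x => ~ U x).
Proof.
move=> Hc Hi U OU Uz.
pose F := fun V => V = U \/ exists y, ~ U y /\ V = (fun t => t = y).
have [L [HL1 HL2]] : exists L : list (T -> Prop), (forall V, List.In V L -> F V) /\
      (forall x, exists V, List.In V L /\ V x).
  apply: Hc.
    move=> V [->|[y [Ny ->]]] //. apply: Hi => Eyz; subst; exact: Ny.
  move=> x; case: (classic (U x)) => [Ux|Nx]; first by exists U; split => //; left.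
  exists (fun t => t = x); split => //; right; by exists x.
have : exists l, forall x, ~ U x -> (exists V, List.In V L /\ V x) -> List.In x l.
  elim: L HL1 {HL2} => [|V L IH] HL.
    by exists nil => x _ [V [[]]].
  have [l Hl] := IH (fun W HW => HL W (or_intror HW)).
  case: (HL V (or_introl erefl)) => [EV|[y [Ny EV]]].
    exists l => x Nx [W [[EW|HW] Wx]]; last by apply: Hl => //; exists W.
    by subst; exfalso.
  exists (y :: l) => x Nx [W [[EW|HW] Wx]]; last by right; apply: Hl => //; exists W.
  by subst; left.
move=> [l Hl]; exists l => x Nx; exact: Hl.
Qed.

Lemma open_nlist (P : T -> Prop) (l : list T) :
  O (fun s => forall y, List.In y l -> P y -> s <> y).
Proof.
elim: l => [|h l IH].
  apply: (open_ext open_true) => s; split => // _ y [].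
case: (classic (P h)) => [Ph|Nh].
  apply: (open_ext (open_inter IH (open_neq h))) => s; split.
    by move=> [H1 H2] y [<-|Hy] Py //; exact: H1.
  move=> H; split; first by move=> y Hy; apply: H; right.
  by apply: H => //; left.
apply: (open_ext IH) => s; split.
  by move=> H1 y [<-|Hy] Py //; exact: H1.
by move=> H y Hy; apply: H; right.
Qed.

End Haus.
End Top.


Section SG.
Variable T : Type.
Variable O : (T -> Prop) -> Prop.
Variable m : T -> T -> T.
Hypothesis HO : is_topology O.
Hypothesis HJ : jcont O m.

Lemma open_pre_l a W : O W -> O (fun t => W (m a t)).
Proof.
move=> OW; apply: (open_local HO) => t Wt.
have [U [V [OU OV Ua Vt H]]] := HJ OW Wt.
exists V; split => //; split => // y Vy; exact: H.
Qed.

Lemma open_pre_r a W : O W -> O (fun t => W (m t a)).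
Proof.
move=> OW; apply: (open_local HO) => t Wt.
have [U [V [OU OV Ut Va H]]] := HJ OW Wt.
exists U; split => //; split => // y Uy; exact: H.
Qed.
End SG.

Section F1.
Variable E : graph.
Variable tau : (GE E -> Prop) -> Prop.
Hypothesis Hac : acyclic E.
Hypothesis Htop : top_semigroup tau (@gmul E).

Let HO : is_topology tau. Proof. by case: Htop. Qed.
Let HH : hausdorff tau. Proof. by case: Htop. Qed.
Let HJ : jcont tau (@gmul E). Proof. by case: Htop. Qed.

Lemma val_gzero : val (gzero E) = None.
Proof. by []. Qed.

Lemma eq_gzero (x : GE E) : val x = None -> x = gzero E.
Proof. move=> H; apply: val_inj; by rewrite H. Qed.

Lemma neq_gzero (x : GE E) : x <> gzero E -> exists u v, val x = Some (u, v).
Proof.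
move=> H; case Ex: (val x) => [[u v]|]; first by exists u, v.
exfalso; apply: H; exact: eq_gzero.
Qed.

Definition vtxG (w : vtx E) : GE E := mkGE (vtxo w).
Lemma val_vtxG w : val (vtxG w) = vtxo w.
Proof. apply: val_mkGE. by rewrite /vtxo gwfE /= eqxx. Qed.

Definition finvG (f : edg E) : GE E := mkGE (finvo f).
Lemma val_finvG f : val (finvG f) = finvo f.
Proof. apply: val_mkGE. by rewrite /finvo gwfE /= !eqxx. Qed.

Definition feG (f : edg E) : GE E := mkGE (feo f).
Lemma val_feG f : val (feG f) = feo f.
Proof. apply: val_mkGE. by rewrite /feo gwfE /= !eqxx. Qed.

Lemma prod_nz (x y : GE E) : gmul x y <> gzero E -> rmul (val x) (val y) <> None.
Proof. move=> H Hn; apply: H; apply: eq_gzero; by rewrite val_gmul. Qed.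

Lemma vtx_iso e : tau (fun y => y = vtxG e).
Proof.
set ev := vtxG e.
have ev0 : ev <> gzero E by move=> /(congr1 val); rewrite val_vtxG.
have [U0 [V0 [OU0 OV0 U0e V0z D0]]] := HH ev0.
have eee : gmul ev ev = ev by apply: val_inj; rewrite val_gmul val_vtxG rmul_vtx_vtx eqxx.
rewrite -eee in U0e.
have [P [Q [OP OQ Pe Qe HPQ]]] := HJ OU0 U0e.
pose W1 := fun y => P (gmul (gmul ev y) ev) /\ Q (gmul (gmul ev y) ev).
have OW1 : tau W1.
  apply: (open_pre_l (W := fun s => P (gmul s ev) /\ Q (gmul s ev)) HO HJ ev).
  apply: (open_pre_r (W := fun s => P s /\ Q s) HO HJ ev); exact: open_inter.
have W1e : W1 ev by rewrite /W1 !eee; split.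
have C5 : forall y, W1 y -> y = ev \/ exists u, val y = Some (u, u) /\ u.1 = e /\ u.2 <> [::].
  move=> y [Py Qy].
  have Hnz : gmul (gmul (gmul ev y) ev) (gmul (gmul ev y) ev) <> gzero E.
    move=> Hz; apply: (D0 (gzero E)) => //; rewrite -Hz; exact: HPQ.
  move/prod_nz: Hnz; rewrite !val_gmul !val_vtxG.
  case Ey: (val y) => [[u v]|]; last by [].
  rewrite rmul_vtx_l; case: eqP => [Hu|]; last by [].
  rewrite rmul_vtx_r; case: eqP => [Hv|]; last by [].
  move=> /eqP Hn.
  have Hwf : gwf (Some (u, v)) by rewrite -Ey; exact: valP.
  have Euv := rmul_sq Hac Hwf Hn. subst v.
  case Eu2: u.2 => [|x s].
    left; apply: val_inj; rewrite Ey val_vtxG; case: u Hu Eu2 {Hwf Hv Ey Hn} => a s /= -> ->. by [].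
  right; exists u; split => //; split => //; by rewrite Eu2.
case: (classic (exists y0, W1 y0 /\ y0 <> ev)) => [[y0 [W1y0 Ny0]]|Hn]; last first.
  apply: (fin_iso (l := nil) HO HH OW1 W1e) => y Wy.
  case: (classic (y = ev)) => [|Nye]; first by left.
  exfalso; apply: Hn; by exists y.
have [u0 [Ey0 [Hu01 Hu02]]] : exists u, val y0 = Some (u, u) /\ u.1 = e /\ u.2 <> [::].
  by case: (C5 _ W1y0).
have [P' [R [OP' OR P'e Ry0 D1]]] := HH (nesym Ny0).
have ey0 : gmul ev y0 = y0.
  apply: val_inj; rewrite val_gmul val_vtxG Ey0 rmul_vtx_l Hu01 eqxx. by [].
have RC : (fun t => R t /\ t <> gzero E) (gmul ev y0).
  rewrite ey0; split => // Hz; move: Ey0; by rewrite Hz.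
have [P2 [Q2 [OP2 OQ2 P2e Q2y0 H2]]] := HJ (open_inter HO OR (open_neq HO HH (gzero E))) RC.
pose W2 := fun y => W1 y /\ P' y /\ P2 y.
have OW2 : tau W2 by apply: open_inter => //; exact: open_inter.
apply: (fin_iso (l := List.map (fun k => mkGE (Some ((e, take k u0.2), (e, take k u0.2))))
             (List.seq 0 (size u0.2).+1)) HO HH OW2) => //.
move=> y [W1y [P'y P2y]].
case: (C5 _ W1y) => [|[[a s] [Ey [Hu1 Hu2]]]]; first by left.
right; apply List.in_map_iff. simpl in Hu1. subst a.
have [Rp Np] := H2 _ _ P2y Q2y0.
have Hnn : rmul (val y) (val y0) <> None by move=> Hz; apply: Np; apply: eq_gzero; rewrite val_gmul.
rewrite Ey Ey0 rmul_idp Hu01 eqxx /= in Hnn.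
move: Hnn; case: ifP => [Hpre _|Hn1].
  have [p Ep] := pref_ex Hpre.
  exists (size s); split.
    apply: val_inj; rewrite val_mkGE; last by rewrite Ep take_size_cat // -Ey; exact: valP.
    by rewrite Ey Ep take_size_cat.
  apply List.in_seq; split; first exact: le_0_n.
  apply/ltP; by rewrite /= Ep size_cat ltnS leq_addr.
case: ifP => [Hpre2 _|_ []]; last by [].
exfalso; apply: (D1 y) => //.
have -> : y = gmul y y0 by apply: val_inj; rewrite val_gmul Ey Ey0 rmul_idp Hu01 eqxx /= Hn1 Hpre2.
by [].
Qed.

Lemma endv_cons (a : vtx E) (f : edg E) s : endv a (f :: s) = endv (grng f) s.
Proof. by []. Qed.

Lemma iso_n n : forall (x : GE E) u v, val x = Some (u, v) ->
  size u.2 + size v.2 <= n -> tau (fun y => y = x).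
Proof.
elim: n => [|n IH] x [a s] [b t] Ex Hn.
  have Hwf := valP x; rewrite Ex gwfE /= in Hwf.
  case: s t Ex Hn Hwf => [|? ?] [|? ?] // Ex _ /and3P [_ _ /eqP Hab].
  rewrite /endv /= in Hab; subst b.
  have -> : x = vtxG a by apply: val_inj; rewrite Ex val_vtxG.
  exact: vtx_iso.
have Hwf := valP x; rewrite Ex gwfE /= in Hwf.
move: Hwf => /and3P [Hs Ht /eqP Hst].
case: s Ex Hn Hs Hst => [|f u'] Ex Hn Hs Hst.
  case: t Ex Hn Ht Hst => [|g v'] Ex Hn Ht Hst.
    rewrite /endv /= in Hst; subst b.
    have -> : x = vtxG a by apply: val_inj; rewrite Ex val_vtxG.
    exact: vtx_iso.
  move: Ht => /= /andP [/eqP Hgb Hv'].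
  pose t0 := mkGE (Some ((a, [::]), (grng g, v'))).
  have Et0 : val t0 = Some ((a, [::]), (grng g, v')).
    apply: val_mkGE; by rewrite gwfE /= Hv' Hst endv_cons eqxx.
  have It0 : tau (fun y => y = t0) by apply: (IH t0 _ _ Et0); move: Hn; rewrite /= !add0n ltnS.
  have OO : tau (fun y => gmul y (feG g) = t0) := open_pre_r (W := fun s => s = t0) HO HJ (feG g) It0.
  apply: (fin_iso1 HO HH OO).
    apply: val_inj; by rewrite val_gmul val_feG Ex Et0 rmul_fe.
  move=> y1 y2 H1 H2 N1 N2; exfalso; apply: N1.
  move: H1 => /(congr1 val); rewrite val_gmul val_feG Et0.
  case E1: (val y1) => [[w z]|] // /rmul_fe_pre [Hw Hz].
  apply: val_inj; by rewrite E1 Ex Hw Hz Hgb.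
move: Hs => /= /andP [/eqP Hfa Hu'].
pose t0 := mkGE (Some ((grng f, u'), (b, t))).
have Et0 : val t0 = Some ((grng f, u'), (b, t)).
  apply: val_mkGE; by rewrite gwfE /= Hu' Ht -Hst endv_cons eqxx.
have It0 : tau (fun y => y = t0) by apply: (IH t0 _ _ Et0); move: Hn; rewrite /= addSn ltnS.
have OO : tau (fun y => gmul (finvG f) y = t0) := open_pre_l (W := fun s => s = t0) HO HJ (finvG f) It0.
apply: (fin_iso1 HO HH OO).
  apply: val_inj; by rewrite val_gmul val_finvG Ex Et0 rmul_finv.
move=> y1 y2 H1 H2 N1 N2.
move: H1 => /(congr1 val); rewrite val_gmul val_finvG Et0.
case E1: (val y1) => [[w1 z1]|] // /rmul_finv_pre [[Hw Hz]|[Hw1 [Hz1 Hr1]]].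
  exfalso; apply: N1; apply: val_inj; by rewrite E1 Ex Hw Hz Hfa.
move: H2 => /(congr1 val); rewrite val_gmul val_finvG Et0.
case E2: (val y2) => [[w2 z2]|] // /rmul_finv_pre [[Hw Hz]|[Hw2 [Hz2 Hr2]]].
  exfalso; apply: N2; apply: val_inj; by rewrite E2 Ex Hw Hz Hfa.
apply: val_inj; rewrite E1 E2 Hw1 Hw2.
have : z1.2 = z2.2 by apply: (@rcons_injl _ f); rewrite Hr1 Hr2.
by case: z1 z2 Hz1 Hz2 {Hr1 Hr2 E1 E2} => [c1 q1] [c2 q2] /= -> -> ->.
Qed.

Lemma iso_nz (x : GE E) : x <> gzero E -> tau (fun y => y = x).
Proof.
move=> /neq_gzero [u [v Ex]]. exact: (iso_n (n := size u.2 + size v.2) Ex).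
Qed.

Lemma tauc_of_compact : compact tau -> forall U, tau U <-> tau_c U.
Proof.
move=> Hc U; split.
  move=> OU U0; exact: (compact_cof Hc iso_nz OU U0).
move=> HU; case: (classic (U (gzero E))) => [U0|N0].
  have [l Hl] := HU U0.
  apply: (open_ext (open_nlist HO HH (fun y => ~ U y) l)) => x; split.
    move=> H; apply: NNPP => Nx; exact: (H x (Hl x Nx) Nx).
  by move=> Ux y _ Ny Exy; subst y.
apply: (open_local HO) => x Ux; exists (fun y => y = x); split.
  apply: iso_nz => Ex; subst x; exact: N0.
by split => // y ->.
Qed.

Lemma compact_of_tauc : (forall U, tau U <-> tau_c U) -> compact tau.
Proof.
move=> H; apply: (compact_of_cof (z := gzero E)) => U OU U0.
exact: (proj1 (H U) OU U0).
Qed.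

End F1.


Section Emb.
Variable E : graph.
Variable tau : (GE E -> Prop) -> Prop.
Hypothesis Hac : acyclic E.
Hypothesis Htop : top_semigroup tau (@gmul E).
Variable S : Type.
Variable tauS : (S -> Prop) -> Prop.
Variable m : S -> S -> S.
Variable f : GE E -> S.
Hypothesis HS : top_semigroup tauS m.
Hypothesis Hclp : clp_compact tauS.
Hypothesis Hhom : forall x y, f (gmul x y) = m (f x) (f y).
Hypothesis Hemb : top_embedding tau tauS f.
Hypothesis Hden : dense tauS (fun s => exists x, f x = s).

Let HO : is_topology tau. Proof. by case: Htop. Qed.
Let HH : hausdorff tau. Proof. by case: Htop. Qed.
Let HJ : jcont tau (@gmul E). Proof. by case: Htop. Qed.
Let HOS : is_topology tauS. Proof. by case: HS. Qed.
Let HHS : hausdorff tauS. Proof. by case: HS. Qed.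
Let HJS : jcont tauS m. Proof. by case: HS. Qed.

Let Z := f (gzero E).

Lemma pre_open V : tauS V -> tau (fun x => V (f x)).
Proof. move=> OV; apply/(proj2 Hemb); by exists V. Qed.

Lemma img_open U : tau U -> exists V, tauS V /\ forall x, U x <-> V (f x).
Proof. move=> OU; exact: (proj1 (proj2 Hemb U)). Qed.

Lemma iso_S (x : GE E) : x <> gzero E -> tauS (fun t => t = f x).
Proof.
move=> /(iso_nz Hac Htop) /img_open [V [OV HV]].
apply: (open_ext OV) => t; split; last by move=> ->; apply/HV.
move=> Vt; apply: NNPP => Ntx.
have [O1 [O2 [OO1 OO2 O1t O2x D]]] := HHS Ntx.
have [s [[Vs O1s] [y Ey]]] := Hden (open_inter HOS OV OO1) (ex_intro _ t (conj Vt O1t)).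
subst s. have Eyx : y = x by apply/HV.
subst y; exact: D O1s O2x.
Qed.

Lemma gmul_x0 (x : GE E) : gmul x (gzero E) = gzero E.
Proof. apply: val_inj; rewrite val_gmul /=; by case: (val x) => [[]|]. Qed.

Lemma gmul_0x (x : GE E) : gmul (gzero E) x = gzero E.
Proof. apply: val_inj; by rewrite val_gmul /=. Qed.

Lemma zero_r t : m t Z = Z.
Proof.
apply: NNPP => Hne.
have [O1 [O2 [OO1 OO2 O1t O2z D]]] := HHS Hne.
have ON : tauS (fun s => O1 (m s Z)) := open_pre_r (W := O1) HOS HJS Z OO1.
have [s [O1s [y Ey]]] := Hden ON (ex_intro _ t O1t).
subst s; move: O1s; rewrite /Z -Hhom gmul_x0 => O1z. exact: D O1z O2z.
Qed.

Lemma zero_l t : m Z t = Z.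
Proof.
apply: NNPP => Hne.
have [O1 [O2 [OO1 OO2 O1t O2z D]]] := HHS Hne.
have ON : tauS (fun s => O1 (m Z s)) := open_pre_l (W := O1) HOS HJS Z OO1.
have [s [O1s [y Ey]]] := Hden ON (ex_intro _ t O1t).
subst s; move: O1s; rewrite /Z -Hhom gmul_0x => O1z. exact: D O1z O2z.
Qed.

Lemma open_neq_list (P : GE E -> Prop) (l : list (GE E)) :
  tauS (fun s => forall y, List.In y l -> P y -> s <> f y).
Proof.
elim: l => [|h l IH].
  apply: (open_ext (open_true HOS)) => s; split => // _ y [].
case: (classic (P h)) => [Ph|Nh].
  apply: (open_ext (open_inter HOS IH (open_neq HOS HHS (f h)))) => s; split.
    by move=> [H1 H2] y [<-|Hy] Py //; exact: H1.
  move=> H; split; first by move=> y Hy; apply: H; right.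
  by apply: H => //; left.
apply: (open_ext IH) => s; split.
  by move=> H1 y [<-|Hy] Py //; exact: H1.
by move=> H y Hy; apply: H; right.
Qed.

Lemma limpt (A : GE E -> Prop) : (forall x, A x -> x <> gzero E) -> ~ fincov A ->
  exists s, forall Q l, tauS Q -> Q s -> exists x, A x /\ Q (f x) /\ ~ List.In x l.
Proof.
move=> Anz HA; apply: NNPP => Hno; apply: HA.
have Hloc : forall s, exists Q l, tauS Q /\ Q s /\ forall x, A x -> Q (f x) -> List.In x l.
  move=> s; apply: NNPP => Hk; apply: Hno; exists s => Q l OQ Qs.
  apply: NNPP => Hk2; apply: Hk; exists Q, l; split => //; split => // x Ax Qx.
  apply: NNPP => Nin; apply: Hk2; by exists x.
pose FA := fun t => exists x, A x /\ f x = t.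
have OnFA : tauS (fun t => ~ FA t).
  apply: (open_local HOS) => t Nt.
  have [Q [l [OQ [Qt Hl]]]] := Hloc t.
  exists (fun s => Q s /\ forall y, List.In y l -> A y -> s <> f y); split.
    exact: (open_inter HOS OQ (open_neq_list A l)).
  split.
    split => // y _ Ay Ety; apply: Nt; by exists y.
  move=> s [Qs Hs] [x [Ax Exs]]; subst s.
  exact: (Hs x (Hl x Ax Qs) Ax).
have OFA : tauS FA.
  apply: (open_local HOS) => t [x [Ax Ext]]; subst t.
  exists (fun t => t = f x); split; first exact: iso_S (Anz x Ax).
  split => // s ->; by exists x.
pose F := fun U => U = (fun t => ~ FA t) \/ exists y, A y /\ U = (fun t => t = f y).
have [L [HL1 HL2]] : exists L : list (S -> Prop), (forall U, List.In U L -> F U) /\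
      (forall x, exists U, List.In U L /\ U x).
  apply: Hclp.
    move=> U [->|[y [Ay ->]]]; split => //.
      apply: (open_ext OFA) => t; split; [by move=> H H'|exact: NNPP].
    exact: iso_S (Anz y Ay).
    exact: open_neq HOS HHS (f y).
  move=> t; case: (classic (FA t)) => [[y [Ay Eyt]]|Nt].
    exists (fun s => s = f y); split; last by [].
    right; by exists y.
  exists (fun s => ~ FA s); split => //; by left.
have : exists l, forall x, A x -> (exists U, List.In U L /\ U (f x)) -> List.In x l.
  elim: L HL1 {HL2} => [|U L IH] HL.
    by exists nil => x _ [U [[]]].
  have [l Hl] := IH (fun W HW => HL W (or_intror HW)).
  case: (HL U (or_introl erefl)) => [EU|[y [Ay EU]]].
    exists l => x Ax [W [[EW|HW] Wx]]; last by apply: Hl => //; exists W.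
    subst; exfalso; apply: Wx; by exists x.
  exists (y :: l) => x Ax [W [[EW|HW] Wx]]; last by right; apply: Hl => //; exists W.
  subst; left; symmetry; exact: (proj1 Hemb).
move=> [l Hl]; exists l => x Ax; apply: Hl => //; exact: HL2.
Qed.


Lemma P1 (A : GE E -> Prop) :
  (forall x, A x -> x <> gzero E /\ gmul x x = x) ->
  (forall x y, A x -> A y -> x <> y -> gmul x y = gzero E) ->
  forall U, tau U -> U (gzero E) -> fincov (fun x => A x /\ ~ U x).
Proof.
move=> HA Horth U OU U0; apply: NNPP => Hn.
have [s Hs] := limpt (A := fun x => A x /\ ~ U x) (fun x Hx => (HA x Hx.1).1) Hn.
have [V [OV HV]] := img_open OU.
have Ess : m s s = Z.
  apply: NNPP => Hne.
  have [O1 [O2 [OO1 OO2 O1t O2z D]]] := HHS Hne.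
  have [P [Q [OP OQ Ps Qs HPQ]]] := HJS OO1 O1t.
  have [x [[Ax _] [[Px Qx] _]]] := Hs _ nil (open_inter HOS OP OQ) (conj Ps Qs).
  have [y [[Ay _] [[Py Qy] Nyx]]] := Hs _ (x :: nil) (open_inter HOS OP OQ) (conj Ps Qs).
  have Nxy : x <> y by move=> Exy; apply: Nyx; left.
  have := HPQ _ _ Px Qy; rewrite -Hhom Horth // => O1z. exact: D O1z O2z.
have Vss : V (m s s) by rewrite Ess; apply/HV.
have [P [Q [OP OQ Ps Qs HPQ]]] := HJS OV Vss.
have [x [[Ax Nx] [[Px Qx] _]]] := Hs _ nil (open_inter HOS OP OQ) (conj Ps Qs).
apply: Nx; apply/HV. have := HPQ _ _ Px Qx; by rewrite -Hhom (HA x Ax).2.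
Qed.


Definition aopt (o : option (pth E * pth E)) := if o is Some (u, _) then ao u else None.
Definition bopt (o : option (pth E * pth E)) := if o is Some (u, _) then bo u else None.
Definition gopt (o : option (pth E * pth E)) := if o is Some (u, _) then Some (u, u) else None.
Definition hopt (o : option (pth E * pth E)) := if o is Some (_, v) then Some (v, v) else None.
Definition aG (x : GE E) := mkGE (aopt (val x)).
Definition bG (x : GE E) := mkGE (bopt (val x)).
Definition gG (x : GE E) := mkGE (gopt (val x)).
Definition hG (x : GE E) := mkGE (hopt (val x)).

Lemma wf_parts (x : GE E) u v : val x = Some (u, v) ->
  [/\ vp u.1 u.2, vp v.1 v.2 & endv u.1 u.2 = endv v.1 v.2].
Proof. move=> Ex; have := valP x; rewrite Ex gwfE => /and3P [? ? /eqP ?]. by split. Qed.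

Lemma val_aG x u v : val x = Some (u, v) -> val (aG x) = ao u.
Proof.
move=> Ex; rewrite /aG Ex; apply: val_mkGE; have [H1 _ _] := wf_parts Ex.
by rewrite /ao gwfE /= H1 eqxx.
Qed.

Lemma val_bG x u v : val x = Some (u, v) -> val (bG x) = bo u.
Proof.
move=> Ex; rewrite /bG Ex; apply: val_mkGE; have [H1 _ _] := wf_parts Ex.
by rewrite /bo gwfE /= H1 eqxx.
Qed.

Lemma val_gG x u v : val x = Some (u, v) -> val (gG x) = Some (u, u).
Proof.
move=> Ex; rewrite /gG Ex; apply: val_mkGE; have [H1 _ _] := wf_parts Ex.
by rewrite gwfE /= H1 eqxx.
Qed.

Lemma val_hG x u v : val x = Some (u, v) -> val (hG x) = Some (v, v).
Proof.
move=> Ex; rewrite /hG Ex; apply: val_mkGE; have [_ H1 _] := wf_parts Ex.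
by rewrite gwfE /= H1 eqxx.
Qed.

Lemma lemQ U : tau U -> U (gzero E) ->
  fincov (fun x => (exists u, val x = Some (u, u)) /\ ~ U x).
Proof.
move=> OU U0.
pose Iw w := fun x => (exists u, val x = Some (u, u) /\ endv u.1 u.2 = w) /\ ~ U x.
case: (classic (exists w, ~ fincov (Iw w))) => [[w Hw]|Hall].
  exfalso; apply: Hw.
  apply: (P1 (A := fun x => exists u, val x = Some (u, u) /\ endv u.1 u.2 = w)) => //.
    move=> x [u [Ex _]]; split; first by move=> Ez; move: Ex; rewrite Ez.
    by apply: val_inj; rewrite val_gmul Ex rmul_gl.
  move=> x y [u [Ex Hu]] [u' [Ey Hu']] Nxy.
  apply: eq_gzero; rewrite val_gmul Ex Ey.
  have [H1 _ _] := wf_parts Ex; have [H2 _ _] := wf_parts Ey.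
  apply: rmul_orth => //; first by rewrite Hu Hu'.
  move=> Euu; apply: Nxy; apply: val_inj; by rewrite Ex Ey Euu.
have HIw : forall w, fincov (Iw w) by move=> w; apply: NNPP => H; apply: Hall; exists w.
pose I := fun x => (exists u, val x = Some (u, u)) /\ ~ U x.
apply: NNPP => HnI.
have Hcov : forall Lv : list (GE E),
    fincov (fun x => I x /\ exists w, List.In (vtxG w) Lv /\ Iw w x).
  elim=> [|h Lv [l IH]]; first by exists nil => x [_ [w [[]]]].
  case: (classic (exists w, vtxG w = h)) => [[w0 Ew0]|Nh].
    have [l0 Hl0] := HIw w0.
    exists (l0 ++ l)%list => x [Ix [w [[Eh|Hin] Hx]]]; apply: List.in_or_app.
      left; apply: Hl0. have -> : w0 = w; last by [].
      move: Eh; rewrite -Ew0 => /(congr1 val); rewrite !val_vtxG; by case.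
    right; apply: IH; split => //; by exists w.
  exists l => x [Ix [w [[Eh|Hin] Hx]]]; first by exfalso; apply: Nh; exists w.
  apply: IH; split => //; by exists w.
have Vs_iso : forall x, (exists w, x = vtxG w) -> x <> gzero E /\ gmul x x = x.
  move=> x [w ->]; split; first by move=> /(congr1 val); rewrite val_vtxG.
  by apply: val_inj; rewrite val_gmul val_vtxG rmul_vtx_vtx eqxx.
have Vs_orth : forall x y, (exists w, x = vtxG w) -> (exists w, y = vtxG w) -> x <> y ->
    gmul x y = gzero E.
  move=> x y [w ->] [w' ->] Nxy; apply: eq_gzero.
  rewrite val_gmul !val_vtxG rmul_vtx_vtx; case: eqP => // Eww; by rewrite Eww in Nxy.
have aG_inj : forall x y, I x -> I y -> aG x = aG y -> x = y.
  move=> x y [[u Ex] _] [[u' Ey] _] /(congr1 val); rewrite (val_aG Ex) (val_aG Ey).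
  by case=> Eu _; apply: val_inj; rewrite Ex Ey Eu.
have bG_inj : forall x y, I x -> I y -> bG x = bG y -> x = y.
  move=> x y [[u Ex] _] [[u' Ey] _] /(congr1 val); rewrite (val_bG Ex) (val_bG Ey).
  by case=> _ Eu; apply: val_inj; rewrite Ex Ey Eu.
have ab : forall x, I x -> gmul (aG x) (bG x) = x.
  move=> x [[u Ex] _]; apply: val_inj; by rewrite val_gmul (val_aG Ex) (val_bG Ex) rmul_ab Ex.
case: (classic (exists N, tauS N /\ N Z /\
          ~ fincov (fun y => exists x, I x /\ y = aG x /\ ~ N (f y)))) => [[N [ON [NZ HN]]]|HNa].
  have Hnz : forall y, (exists x, I x /\ y = aG x /\ ~ N (f y)) -> y <> gzero E.
    move=> y [x [[[u Ex] _] [-> _]]] /(congr1 val); by rewrite (val_aG Ex).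
  have [al Hal] := limpt Hnz HN.
  have NaZ : N (m al Z) by rewrite zero_r.
  have [P [R [OP OR Pal RZ HPR]]] := HJS ON NaZ.
  have [Lv HLv] := P1 Vs_iso Vs_orth (pre_open OR) RZ.
  have [l Hl] := Hcov Lv.
  have [y [[x [Ix [Ey Ny]]] [Py Nin]]] := Hal P (List.map aG l) OP Pal.
  have [[u Ex] Nx] := Ix.
  case: (classic (R (f (vtxG (endv u.1 u.2))))) => [Rw|Nw].
    apply: Ny; rewrite Ey. have := HPR _ _ Py Rw; rewrite Ey -Hhom.
    have -> // : gmul (aG x) (vtxG (endv u.1 u.2)) = aG x.
    by apply: val_inj; rewrite val_gmul (val_aG Ex) val_vtxG rmul_a_vtx eqxx.
  apply: Nin; rewrite Ey; apply: List.in_map; apply: Hl; split => //.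
  exists (endv u.1 u.2); split; first by apply: HLv; split => //; exists (endv u.1 u.2).
  split => //; by exists u.
case: (classic (exists N, tauS N /\ N Z /\
          ~ fincov (fun y => exists x, I x /\ y = bG x /\ ~ N (f y)))) => [[N [ON [NZ HN]]]|HNb].
  have Hnz : forall y, (exists x, I x /\ y = bG x /\ ~ N (f y)) -> y <> gzero E.
    move=> y [x [[[u Ex] _] [-> _]]] /(congr1 val); by rewrite (val_bG Ex).
  have [al Hal] := limpt Hnz HN.
  have NaZ : N (m Z al) by rewrite zero_l.
  have [R [P [OR OP RZ Pal HPR]]] := HJS ON NaZ.
  have [Lv HLv] := P1 Vs_iso Vs_orth (pre_open OR) RZ.
  have [l Hl] := Hcov Lv.
  have [y [[x [Ix [Ey Ny]]] [Py Nin]]] := Hal P (List.map bG l) OP Pal.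
  have [[u Ex] Nx] := Ix.
  case: (classic (R (f (vtxG (endv u.1 u.2))))) => [Rw|Nw].
    apply: Ny; rewrite Ey. have := HPR _ _ Rw Py; rewrite Ey -Hhom.
    have -> // : gmul (vtxG (endv u.1 u.2)) (bG x) = bG x.
    by apply: val_inj; rewrite val_gmul (val_bG Ex) val_vtxG rmul_vtx_b eqxx.
  apply: Nin; rewrite Ey; apply: List.in_map; apply: Hl; split => //.
  exists (endv u.1 u.2); split; first by apply: HLv; split => //; exists (endv u.1 u.2).
  split => //; by exists u.
have Ha : forall N, tauS N -> N Z -> fincov (fun y => exists x, I x /\ y = aG x /\ ~ N (f y)).
  move=> N ON NZ; apply: NNPP => H; apply: HNa; by exists N.
have Hb : forall N, tauS N -> N Z -> fincov (fun y => exists x, I x /\ y = bG x /\ ~ N (f y)).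
  move=> N ON NZ; apply: NNPP => H; apply: HNb; by exists N.
apply: HnI.
have [V [OV HV]] := img_open OU.
have VZZ : V (m Z Z) by rewrite zero_r; apply/HV.
have [P [P' [OP OP' PZ P'Z HPP]]] := HJS OV VZZ.
have [la Hla] := Ha P OP PZ.
have [lb Hlb] := Hb P' OP' P'Z.
have [l1 Hl1] := cover_inj aG_inj la.
have [l2 Hl2] := cover_inj bG_inj lb.
exists (l1 ++ l2)%list => x Ix; apply: List.in_or_app.
case: (classic (P (f (aG x)))) => [Pa|Na]; last by left; apply: Hl1 => //; apply: Hla; exists x.
case: (classic (P' (f (bG x)))) => [Pb|Nb]; last by right; apply: Hl2 => //; apply: Hlb; exists x.
exfalso; apply: Ix.2; apply/HV. have := HPP _ _ Pa Pb; by rewrite -Hhom ab.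
Qed.


Lemma hard U : tau U -> U (gzero E) -> fincov (fun x => ~ U x).
Proof.
move=> OU U0; apply: NNPP => Hn.
have Dnz : forall x, ~ U x -> x <> gzero E by move=> x Nx Ex; subst x.
have [s Hs] := limpt Dnz Hn.
have [V [OV HV]] := img_open OU.
have VZs : V (m Z s) by rewrite zero_l; apply/HV.
have [P [Q [OP OQ PZ Qs HPQ]]] := HJS OV VZs.
have VsZ : V (m s Z) by rewrite zero_r; apply/HV.
have [Q' [P' [OQ' OP' Q's P'Z HQP]]] := HJS OV VsZ.
have [K HK] := lemQ (pre_open OP) PZ.
have [K' HK'] := lemQ (pre_open OP') P'Z.
have gh_inj : forall x y, x <> gzero E -> y <> gzero E ->
    (gG x, hG x) = (gG y, hG y) -> x = y.
  move=> x y /neq_gzero [u [v Ex]] /neq_gzero [u' [v' Ey]] H.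
  have H1 : val (gG x) = val (gG y) by case: H => ->.
  have H2 : val (hG x) = val (hG y) by case: H => _ ->.
  rewrite (val_gG Ex) (val_gG Ey) in H1. rewrite (val_hG Ex) (val_hG Ey) in H2.
  case: H1 => Eu _; case: H2 => Ev _.
  apply: val_inj; by rewrite Ex Ey Eu Ev.
have [l Hl] := cover_inj gh_inj (List.list_prod K K').
have [x [Nx [[Qx Q'x] Nin]]] := Hs _ l (open_inter HOS OQ OQ') (conj Qs Q's).
have [u [v Ex]] := neq_gzero (Dnz x Nx).
apply: Nin; apply: Hl; first exact: Dnz.
apply: List.in_prod.
  case: (classic (P (f (gG x)))) => [Pg|Ng].
    exfalso; apply: Nx; apply/HV; have := HPQ _ _ Pg Qx; rewrite -Hhom.
    have -> // : gmul (gG x) x = x.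
    by apply: val_inj; rewrite val_gmul (val_gG Ex) Ex rmul_gl.
  apply: HK; split => //; by exists u; rewrite (val_gG Ex).
case: (classic (P' (f (hG x)))) => [Ph|Nh].
  exfalso; apply: Nx; apply/HV; have := HQP _ _ Q'x Ph; rewrite -Hhom.
  have -> // : gmul x (hG x) = x.
  by apply: val_inj; rewrite val_gmul (val_hG Ex) Ex rmul_hr.
apply: HK'; split => //; by exists v; rewrite (val_hG Ex).
Qed.

End Emb.

Unset Implicit Arguments.
Set Strict Implicit.

Theorem theorem4p1 (E : graph) (tau : (GE E -> Prop) -> Prop) :
  acyclic E ->
  top_semigroup tau (@gmul E) ->
  ((exists (S : Type) (tauS : (S -> Prop) -> Prop) (m : S -> S -> S)
           (f : GE E -> S),
      [/\ top_semigroup tauS m, clp_compact tauS,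
          (forall x y, f (gmul x y) = m (f x) (f y)),
          top_embedding tau tauS f &
          dense tauS (fun s => exists x, f x = s)])
   <-> compact tau)
  /\ (compact tau <-> (forall U, tau U <-> tau_c U)).
Proof.
move=> Hac Htop.
have HO : is_topology tau by case: Htop.
split; last by split; [exact: tauc_of_compact | exact: compact_of_tauc].
split.
  move=> [S [tauS [m [f [HS Hclp Hhom Hemb Hden]]]]].
  apply: (compact_of_cof (z := gzero E)) => U OU U0.
  exact: (hard Hac Htop HS Hclp Hhom Hemb Hden OU U0).
move=> Hc; exists (GE E), tau, (@gmul E), id; split => //.
- move=> F HF Hcov; apply: Hc => // U FU; exact: (HF U FU).1.
- split; first by move=> x y.
  move=> U; split; first by move=> OU; exists U; split.
  move=> [V [OV HV]]; apply: (open_ext OV) => x; split => /HV //.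
- move=> V OV [y Vy]; exists y; split => //; by exists y.
Qed.
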